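(* Let $\mathbf v\in\mathbb Z^4$ satisfy $Q_{\mathcal D}(\mathbf v)=4$, and let $\mathcal C$ be the set of all integers occurring as a coordinate of some element of the orbit $\mathcal A[\mathbf v]$ (the curvatures of the corresponding integral hyperbolic Apollonian packing). Then the set of residues modulo $12$ of elements of $\mathcal C$ omits at least three congruence classes modulo $12$.
   Context: $Q_{\mathcal D}(a,b,c,d)=2(a^2+b^2+c^2+d^2)-(a+b+c+d)^2$. $\mathbf S_i$ ($i=1,\dots,4$) is the $4\times4$ integer matrix replacing the $i$-th coordinate $a_i$ of a column vector by $2\sum_{j\ne i}a_j-a_i$, other coordinates fixed; the Apollonian group $\mathcal A$ is the subgroup of $GL(4,\mathbb Z)$ they generate, and $\mathcal A[\mathbf v]=\{\mathbf U\mathbf v:\mathbf U\in\mathcal A\}$. *)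

(* Defs.v *)
From HB Require Import structures.
From mathcomp Require Import all_boot all_order all_algebra.
Set Implicit Arguments. Unset Strict Implicit. Unset Printing Implicit Defensive.
Import Order.TTheory GRing.Theory Num.Theory.
Local Open Scope ring_scope.

Definition QD (v : 'cV[int]_4) : int :=
  2 * (\sum_(i < 4) v i 0 ^+ 2) - (\sum_(i < 4) v i 0) ^+ 2.

Definition apolS (i : 'I_4) : 'M[int]_4 :=
  \matrix_(r < 4, c < 4)
    (if r == i then (if c == i then -1 else 2) else (r == c)%:R).

Inductive apollonian_group : 'M[int]_4 -> Prop :=
  | ag_gen (i : 'I_4) : apollonian_group (apolS i)
  | ag_one : apollonian_group 1%:M
  | ag_mul U V : apollonian_group U -> apollonian_group V ->
                 apollonian_group (U *m V)
  | ag_inv U : apollonian_group U -> U \in unitmx ->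
               apollonian_group (invmx U).

Definition apollonian_orbit (v : 'cV[int]_4) (w : 'cV[int]_4) : Prop :=
  exists U, apollonian_group U /\ w = U *m v.

Definition curvatures (v : 'cV[int]_4) (c : int) : Prop :=
  exists w, apollonian_orbit v w /\ exists j : 'I_4, w j 0 = c.

(* Main.v *)
Require Import Defs.
From mathcomp Require Import all_boot all_order all_algebra.
From mathcomp Require Import zify ring lra.
Import Order.TTheory GRing.Theory Num.Theory.
Local Open Scope ring_scope.
Definition sumv (w : 'cV[int]_4) : int := \sum_(i < 4) w i 0.

Lemma wnat (w : 'cV[int]_4) : exists g : nat -> int, forall X : 'I_4, w X 0 = g (val X).
Proof. exists (fun n => w (inord n) 0) => X; by rewrite inord_val. Qed.

Lemma sumvE (w : 'cV[int]_4) (g : nat -> int) : (forall X : 'I_4, w X 0 = g (val X)) ->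
  sumv w = g 0%N + g 1%N + g 2%N + g 3%N.
Proof. move=> wE; rewrite /sumv !big_ord_recr big_ord0 /= !wE /=; ring. Qed.

Lemma apolSE k (w : 'cV[int]_4) i :
  (apolS k *m w) i 0 = w i 0 + (i == k)%:R * (2 * sumv w - 4 * w k 0).
Proof.
have [g wE] := wnat w.
rewrite mxE (sumvE _ _ wE) !big_ord_recr big_ord0 /= !add0r !mxE !wE.
case: k => [[|[|[|[|k]]]] Hk] //; case: i => [[|[|[|[|i]]]] Hi] //= ; ring.
Qed.

Lemma dtr (d a b c : int) : (d %| a - b)%Z -> (d %| b - c)%Z -> (d %| a - c)%Z.
Proof. move=> H1 H2; have -> : a - c = (a - b) + (b - c) by ring. exact: rpredD. Qed.
Lemma dsym (d a b : int) : (d %| a - b)%Z -> (d %| b - a)%Z.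
Proof. by move=> H; rewrite -opprB rpredN. Qed.

Definition Inv (U : 'M[int]_4) := forall w : 'cV[int]_4,
  (forall i, (2 %| (U *m w) i 0%R - w i 0%R)%Z) /\
  ((2 %| sumv w)%Z -> forall i, (4 %| (U *m w) i 0%R - w i 0%R)%Z).

Lemma sumv_par (w w' : 'cV[int]_4) : (forall i, (2 %| w' i 0%R - w i 0%R)%Z) ->
  (2 %| sumv w)%Z -> (2 %| sumv w')%Z.
Proof.
have [g wE] := wnat w; have [g' wE'] := wnat w'.
rewrite (sumvE _ _ wE) (sumvE _ _ wE') => H.
have := H (@Ordinal 4 0 isT); have := H (@Ordinal 4 1 isT).
have := H (@Ordinal 4 2 isT); have := H (@Ordinal 4 3 isT).
rewrite !wE !wE' /=; lia.
Qed.

Lemma Inv_S k : Inv (apolS k).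
Proof.
move=> w; split => [i|Hs i]; rewrite apolSE; case: (i == k) => /=; lia.
Qed.

Lemma Inv_one : Inv 1%:M.
Proof. by move=> w; rewrite mul1mx; split => [i|Hs i]; rewrite subrr dvdz0. Qed.

Lemma Inv_mul U V : Inv U -> Inv V -> Inv (U *m V).
Proof.
move=> HU HV w; have [V2 V4] := HV w; have [U2 U4] := HU (V *m w).
rewrite -mulmxA; split.
- by move=> i; apply: dtr (U2 i) (V2 i).
- move=> Hs i; have Hs' := sumv_par _ _ V2 Hs.
  exact: dtr (U4 Hs' i) (V4 Hs i).
Qed.

Lemma Inv_inv U : Inv U -> U \in unitmx -> Inv (invmx U).
Proof.
move=> HU Hu w; set x := invmx U *m w.
have Ex : U *m x = w by rewrite /x mulmxA mulmxV // mul1mx.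
have [U2 U4] := HU x; rewrite Ex in U2 U4.
have X2 : forall i, (2 %| x i 0%R - w i 0%R)%Z by move=> i; apply: dsym.
split => // Hs i.
have Hx := sumv_par _ _ X2 Hs.
exact: dsym (U4 Hx i).
Qed.

Lemma Inv_group U : apollonian_group U -> Inv U.
Proof.
elim => [k|||]; [exact: Inv_S | exact: Inv_one | by move=> *; apply: Inv_mul | ].
by move=> V _ HV Hu; apply: Inv_inv.
Qed.

Lemma res4 (a b c d : int) : 0 <= a < 4 -> 0 <= b < 4 -> 0 <= c < 4 -> 0 <= d < 4 ->
 (exists x : int, [/\ 0 <= x < 4, x != a, x != b, x != c & x != d]) \/
 (a + b + c + d = 6 /\ a ^+ 2 + b ^+ 2 + c ^+ 2 + d ^+ 2 = 14).
Proof.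
have H (y : int) : 0 <= y < 4 -> y = 0 \/ y = 1 \/ y = 2 \/ y = 3 by lia.
move=> /H[->|[->|[->|->]]] /H[->|[->|[->|->]]] /H[->|[->|[->|->]]] /H[->|[->|[->|->]]];
 first [ by right | by left; exists 0 | by left; exists 1 | by left; exists 2 | by left; exists 3].
Qed.

Lemma QD_bad (q0 q1 q2 q3 r0 r1 r2 r3 : int) :
  r0 + r1 + r2 + r3 = 6 -> r0 ^+ 2 + r1 ^+ 2 + r2 ^+ 2 + r3 ^+ 2 = 14 ->
  2 * ((q0 * 4 + r0) ^+ 2 + (q1 * 4 + r1) ^+ 2 + (q2 * 4 + r2) ^+ 2 + (q3 * 4 + r3) ^+ 2)
  - ((q0 * 4 + r0) + (q1 * 4 + r1) + (q2 * 4 + r2) + (q3 * 4 + r3)) ^+ 2 != 4.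
Proof.
move=> H1 H2.
have -> : 2 * ((q0 * 4 + r0) ^+ 2 + (q1 * 4 + r1) ^+ 2 + (q2 * 4 + r2) ^+ 2 + (q3 * 4 + r3) ^+ 2)
  - ((q0 * 4 + r0) + (q1 * 4 + r1) + (q2 * 4 + r2) + (q3 * 4 + r3)) ^+ 2 =
  8 * (4 * (q0 ^+ 2 + q1 ^+ 2 + q2 ^+ 2 + q3 ^+ 2) + 2 * (q0 * r0 + q1 * r1 + q2 * r2 + q3 * r3)
       - 2 * (q0 + q1 + q2 + q3) ^+ 2 - (q0 + q1 + q2 + q3) * (r0 + r1 + r2 + r3))
  + 2 * (r0 ^+ 2 + r1 ^+ 2 + r2 ^+ 2 + r3 ^+ 2) - (r0 + r1 + r2 + r3) ^+ 2 by ring.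
rewrite H1 H2.
set K := (X in 8 * X).
clearbody K; apply/eqP; lia.
Qed.

Lemma cardA (x : int) : 0 <= x < 4 ->
  (2 < #|[set r : 'I_12 | ((nat_of_ord r)%:Z %% 4)%Z == x]|)%N.
Proof.
move=> Hx; have xb : (absz x < 4)%N by lia.
apply/card_gt2P; exists (inord (absz x)), (inord (absz x + 4)), (inord (absz x + 8)).
rewrite !inE !inordK; try lia.
split; first by split; apply/eqP; lia.
by split; apply/eqP => /(congr1 val); rewrite /= !inordK; lia.
Qed.

Lemma finc (y gj x : int) (r : nat) : (4 %| y - gj)%Z -> x != (gj %% 4)%Z ->
  (r%:Z %% 4)%Z = x -> (y %% 12)%Z = r%:Z -> False.
Proof. lia. Qed.

Theorem theorem5p2 (v : 'cV[int]_4) :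
  QD v = 4 ->
  exists A : {set 'I_12},
    (3 <= #|A|)%N /\
    forall c : int, curvatures v c ->
      forall r : 'I_12, r \in A -> (c %% 12)%Z != (nat_of_ord r)%:Z.
Proof.
move=> HQ.
have [g vE] := wnat v.
have QDg : QD v = 2 * (g 0%N ^+ 2 + g 1%N ^+ 2 + g 2%N ^+ 2 + g 3%N ^+ 2)
    - (g 0%N + g 1%N + g 2%N + g 3%N) ^+ 2.
  by rewrite /QD !big_ord_recr !big_ord0 /= !vE /= !add0r.
have Hs : (2 %| sumv v)%Z.
  rewrite (sumvE _ _ vE); rewrite HQ in QDg.
  move: QDg; set S := (X in 2 * X - _); set s := (X in _ - X ^+ 2) => QDg.
  rewrite -/s; clearbody S s.
  have [t [-> | Et]] : exists t, s = 2 * t \/ s = 2 * t + 1.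
    by exists (s %/ 2)%Z; lia.
    by apply/dvdzP; exists t; ring.
  exfalso; move: QDg; rewrite Et.
  have -> : (2 * t + 1) ^+ 2 = 4 * (t ^+ 2 + t) + 1 by ring.
  move: (t ^+ 2 + t) => u; lia.
have B n : 0 <= (g n %% 4)%Z < 4 by lia.
case: (res4 _ _ _ _ (B 0%N) (B 1%N) (B 2%N) (B 3%N)) => [[x [Hx H0 H1 H2 H3]] | [E1 E2]]; last first.
  move: HQ; rewrite QDg.
  rewrite (divz_eq (g 0%N) 4) (divz_eq (g 1%N) 4) (divz_eq (g 2%N) 4) (divz_eq (g 3%N) 4).
  by move/eqP; rewrite (negbTE (QD_bad _ _ _ _ _ _ _ _ E1 E2)).
have Hj (j : 'I_4) : x != (g j %% 4)%Z.
  by case: j => [[|[|[|[|j]]]] Hj] //=.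
exists [set r : 'I_12 | ((nat_of_ord r)%:Z %% 4)%Z == x].
split; first exact: cardA.
move=> c [w [[U [HU ->]] [j <-]]] r; rewrite inE => /eqP Hr.
have [_ U4] := Inv_group _ HU v.
have := U4 Hs j; rewrite vE.
move=> K2; apply/eqP => Hc.
exact: finc K2 (Hj j) Hr Hc.
Qed.
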